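(* Let $\alpha>0$ be non-integer, $n=\lfloor\alpha\rfloor+1$, $a\in\mathbb{R}$, $a(\alpha)=a+n-1$, $c\in\mathbb{R}$, and $f:\mathbb{N}_{a(\alpha)}\times\mathbb{R}\to\mathbb{R}$. Suppose $y:\mathbb{N}_{a(\alpha)}\to\mathbb{R}$ satisfies the initial value problem $$\nabla^{\alpha}_{a(\alpha)-1}y(t)=f(t,y(t)),\quad t=a(\alpha)+1,a(\alpha)+2,\dots,\qquad \nabla^{-(n-\alpha)}_{a(\alpha)-1}y(t)\big|_{t=a(\alpha)}=y(a(\alpha))=c.$$ Then for all $t\in\mathbb{N}_{a(\alpha)}$, $$y(t)=\frac{(t-a(\alpha)+1)^{\overline{\alpha-1}}}{\Gamma(\alpha)}\,c+\nabla^{-\alpha}_{a(\alpha)}f(t,y(t)),$$ where $\nabla^{-\alpha}_{a(\alpha)}f(t,y(t))=\frac{1}{\Gamma(\alpha)}\sum_{s=a(\alpha)+1}^{t}(t-\rho(s))^{\overline{\alpha-1}}f(s,y(s))$.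
   Context: Notation: $\mathbb{N}_c=\{c,c+1,\dots\}$, $\rho(t)=t-1$, $\nabla h(t)=h(t)-h(t-1)$, $\nabla^m=\nabla(\nabla^{m-1})$. Rising factorial $t^{\overline{\gamma}}=\Gamma(t+\gamma)/\Gamma(t)$ with $0^{\overline{\gamma}}=0$. Nabla left fractional sum of order $\gamma>0$ starting at $d$: $\nabla_d^{-\gamma}h(t)=\frac{1}{\Gamma(\gamma)}\sum_{s=d+1}^{t}(t-\rho(s))^{\overline{\gamma-1}}h(s)$, with sums whose upper limit is below the lower limit equal to $0$. Nabla left fractional difference of order $\alpha$: $\nabla_d^{\alpha}h(t)=\nabla^n\nabla_d^{-(n-\alpha)}h(t)$. *)

(* Defs.v *)
From Stdlib Require Import Reals Lra Lia ZArith ClassicalEpsilon List.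
Open Scope R_scope.

Fixpoint gauss_den (x : R) (m : nat) : R :=
  match m with
  | O => x
  | S k => gauss_den x k * (x + INR (S k))
  end.

Definition gauss_seq (x : R) (m : nat) : R :=
  INR (fact m) * Rpower (INR m) x / gauss_den x m.

(* Gamma function, defined as the limit of the Gauss product
   (Gamma x = lim_m m! m^x / (x(x+1)...(x+m)), valid for x not in {0,-1,-2,...});
   only used at positive arguments below. *)
Definition Gamma (x : R) : R :=
  epsilon (inhabits 0) (fun l => Un_cv (gauss_seq x) l).

Definition rising (t g : R) : R :=
  if Req_EM_T t 0 then 0 else Gamma (t + g) / Gamma t.

Definition nabla (h : R -> R) (t : R) : R := h t - h (t - 1).
Definition nabla_iter (m : nat) (h : R -> R) : R -> R := Nat.iter m nabla h.

(* number of lattice points s = d+1, d+2, ..., t  (t - d integer);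
   0 when t <= d (empty sum convention) *)
Definition nterms (t d : R) : nat := Z.to_nat (up (t - d) - 1).

(* nabla left fractional sum of order g starting at d:
   (1/Gamma g) * sum_{s=d+1}^{t} (t - rho(s))^{(g-1)} h(s) *)
Definition frac_sum (g d : R) (h : R -> R) (t : R) : R :=
  / Gamma g *
  fold_right Rplus 0
    (map (fun j : nat => rising (t - (d + INR j - 1)) (g - 1) * h (d + INR j))
         (seq 1 (nterms t d))).

(* nabla left fractional difference of order alpha, with n = floor(alpha)+1 *)
Definition frac_diff (n : nat) (alpha d : R) (h : R -> R) (t : R) : R :=
  nabla_iter n (frac_sum (INR n - alpha) d h) t.

(* Main.v *)
Require Import Defs.
From Stdlib Require Import Reals.
From mathcomp Require all_boot all_algebra Rstruct ring.
From Stdlib Require Import Reals Lra Lia ZArith ClassicalEpsilon.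
Open Scope R_scope.

Lemma exp_le_mono x y : x <= y -> exp x <= exp y.
Proof. intros [H|H]; [left; apply exp_increasing; auto | subst; lra]. Qed.

Lemma ln_le_mono x y : 0 < x -> x <= y -> ln x <= ln y.
Proof. intros Hx [H|H]; [left; apply ln_increasing; auto | subst; lra]. Qed.

Fixpoint Pr (x : R) (m : nat) : R :=
  match m with O => 1 | S k => Pr x k * (1 + x / INR (S k)) end.
Fixpoint Hs (m : nat) : R :=
  match m with O => 0 | S k => Hs k + / INR (S k) end.
Fixpoint S2 (m : nat) : R :=
  match m with O => 0 | S k => S2 k + / (INR (S k) * INR (S k)) end.

Lemma INR_S_pos k : 0 < INR (S k).
Proof. apply lt_0_INR; lia. Qed.

Lemma den_eq x m : gauss_den x m = x * INR (fact m) * Pr x m.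
Proof.
  induction m as [|k IH]; cbn [gauss_den Pr].
  - simpl. lra.
  - rewrite IH. change (fact (S k)) with (S k * fact k)%nat.
    rewrite mult_INR. pose proof (INR_S_pos k). field. lra.
Qed.

Lemma Pr_pos x m : 0 < x -> 0 < Pr x m.
Proof.
  intros Hx; induction m as [|k IH]; cbn [Pr]; [lra|].
  apply Rmult_lt_0_compat; auto. pose proof (INR_S_pos k).
  assert (0 < x / INR (S k)) by (apply Rdiv_lt_0_compat; lra). lra.
Qed.

Lemma exp_uu u : 0 <= u -> exp (u - u * u) <= 1 + u.
Proof.
  intros Hu.
  pose proof (exp_ineq1_le (- (u - u*u))) as H1.
  assert (HE : exp (u - u*u) * exp (- (u - u*u)) = 1).
  { rewrite <- exp_plus. replace (u - u*u + - (u - u*u)) with 0 by ring. apply exp_0. }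
  pose proof (exp_pos (u - u*u)). pose proof (exp_pos (- (u - u*u))).
  assert (Hq : 0 < 1 - u + u*u) by nra.
  assert (exp (u - u*u) * (1 - u + u*u) <= (1+u) * (1 - u + u*u)).
  { assert (exp (u - u*u) * (1 - u + u*u) <= exp (u - u*u) * exp (- (u - u*u))).
    { apply Rmult_le_compat_l; lra. }
    nra. }
  nra.
Qed.

Lemma Pr_lb x m : 0 < x -> exp (x * Hs m - x * x * S2 m) <= Pr x m.
Proof.
  intros Hx; induction m as [|k IH]; cbn [Pr Hs S2].
  - replace (x * 0 - x * x * 0) with 0 by ring. rewrite exp_0; lra.
  - pose proof (INR_S_pos k). set (u := x / INR (S k)).
    replace (x * (Hs k + / INR (S k)) - x * x * (S2 k + / (INR (S k) * INR (S k))))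
      with ((x * Hs k - x * x * S2 k) + (u - u * u)) by (unfold u; field; lra).
    rewrite exp_plus. apply Rmult_le_compat.
    + left; apply exp_pos.
    + left; apply exp_pos.
    + auto.
    + apply exp_uu. unfold u. left; apply Rdiv_lt_0_compat; lra.
Qed.

Lemma Hs_ub m : INR (S m) <= exp (Hs m).
Proof.
  induction m as [|k IH]; cbn [Hs].
  - rewrite exp_0; simpl; lra.
  - rewrite exp_plus. pose proof (exp_ineq1_le (/ INR (S k))).
    pose proof (INR_S_pos k).
    assert (INR (S (S k)) = INR (S k) * (1 + / INR (S k))).
    { rewrite (S_INR (S k)). field. lra. }
    rewrite H1. apply Rmult_le_compat; try lra.
    assert (0 < / INR (S k)) by (apply Rinv_0_lt_compat; lra). lra.
Qed.

Lemma S2_ub' m : S2 (S m) <= 2 - / INR (S m).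
Proof.
  induction m as [|k IH].
  - simpl. lra.
  - change (S2 (S (S k))) with (S2 (S k) + / (INR (S (S k)) * INR (S (S k)))).
    assert (E : INR (S (S k)) = INR (S k) + 1) by (apply S_INR).
    rewrite E. pose proof (INR_S_pos k).
    assert (/ ((INR (S k) + 1) * (INR (S k) + 1)) <= / INR (S k) - / (INR (S k) + 1)).
    { replace (/ INR (S k) - / (INR (S k) + 1)) with (/ (INR (S k) * (INR (S k) + 1)))
        by (field; lra).
      apply Rinv_le_contravar; nra. }
    lra.
Qed.

Lemma S2_ub m : S2 m <= 2.
Proof.
  destruct m. simpl; lra.
  pose proof (S2_ub' m). pose proof (INR_S_pos m).
  assert (0 < / INR (S m)) by (apply Rinv_0_lt_compat; lra). lra.
Qed.

Lemma S2_nonneg m : 0 <= S2 m.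
Proof.
  induction m; cbn [S2]; [lra|]. pose proof (INR_S_pos m).
  assert (0 < / (INR (S m) * INR (S m))) by (apply Rinv_0_lt_compat; nra). lra.
Qed.

Lemma gauss_pos x m : 0 < x -> (1 <= m)%nat -> 0 < gauss_seq x m.
Proof.
  intros Hx Hm. unfold gauss_seq. rewrite den_eq.
  pose proof (lt_0_INR _ (lt_O_fact m)). pose proof (Pr_pos x m Hx).
  unfold Rpower. pose proof (exp_pos (x * ln (INR m))).
  apply Rdiv_lt_0_compat; [nra|]. apply Rmult_lt_0_compat; nra.
Qed.

Lemma gauss_ub x m : 0 < x -> (1 <= m)%nat ->
  gauss_seq x m <= / (x * exp (- (2 * x * x))).
Proof.
  intros Hx Hm. unfold gauss_seq. rewrite den_eq.
  pose proof (lt_0_INR _ (lt_O_fact m)) as Hf. pose proof (Pr_pos x m Hx) as HP.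
  assert (HmR : 0 < INR m) by (apply lt_0_INR; lia).
  assert (Hln : ln (INR m) <= Hs m).
  { destruct m as [|m']; [lia|].
    pose proof (Hs_ub (S m')) as H1.
    rewrite <- (ln_exp (Hs (S m'))).
    apply ln_le_mono; auto. rewrite (S_INR (S m')) in H1. lra. }
  assert (HA : Rpower (INR m) x <= exp (x * Hs m)).
  { unfold Rpower. apply exp_le_mono. nra. }
  assert (HB : exp (x * Hs m) * exp (- (2 * x * x)) <= Pr x m).
  { rewrite <- exp_plus. eapply Rle_trans; [|apply Pr_lb; auto].
    apply exp_le_mono. pose proof (S2_ub m). pose proof (S2_nonneg m). nra. }
  pose proof (exp_pos (x * Hs m)). pose proof (exp_pos (- (2 * x * x))).
  pose proof (exp_pos (x * ln (INR m))) as HR. unfold Rpower in *.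
  set (E1 := exp (x * Hs m)) in *. set (e := exp (- (2 * x * x))) in *.
  set (A := exp (x * ln (INR m))) in *.
  replace (INR (fact m) * A / (x * INR (fact m) * Pr x m)) with (A / (x * Pr x m))
    by (field; repeat split; lra).
  unfold Rdiv. apply Rle_trans with (E1 * / (x * Pr x m)).
  { apply Rmult_le_compat_r; [left; apply Rinv_0_lt_compat; nra| auto]. }
  apply Rle_trans with (E1 * / (x * (E1 * e))).
  { apply Rmult_le_compat_l; [lra|]. apply Rinv_le_contravar.
    - apply Rmult_lt_0_compat; [lra|]. apply Rmult_lt_0_compat; lra.
    - apply Rmult_le_compat_l; lra. }
  right. field. lra.
Qed.

Lemma gauss_grow x M : 0 < x -> (1 <= M)%nat -> gauss_seq x M <= gauss_seq x (S M).
Proof.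
  intros Hx HM. unfold gauss_seq. cbn [gauss_den].
  assert (HMR : 0 < INR M) by (apply lt_0_INR; lia).
  assert (HSM : INR (S M) = INR M + 1) by apply S_INR.
  assert (HD : 0 < gauss_den x M).
  { rewrite den_eq. pose proof (lt_0_INR _ (lt_O_fact M)). pose proof (Pr_pos x M Hx).
    apply Rmult_lt_0_compat; nra. }
  change (fact (S M)) with (S M * fact M)%nat. rewrite mult_INR.
  pose proof (lt_0_INR _ (lt_O_fact M)) as Hf.
  assert (Hl : / (INR M + 1) <= ln (INR M + 1) - ln (INR M)).
  { pose proof (exp_ineq1_le (ln (INR M) - ln (INR M + 1))) as H1.
    unfold Rminus in H1 at 2. rewrite exp_plus, exp_Ropp, !exp_ln in H1 by lra.
    assert (INR M * / (INR M + 1) = 1 - / (INR M + 1)) by (field; lra). lra. }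
  assert (Hk : Rpower (INR M) x * (x + INR M + 1) <= (INR M + 1) * Rpower (INR M + 1) x).
  { unfold Rpower.
    replace (x * ln (INR M + 1)) with (x * ln (INR M) + x * (ln (INR M + 1) - ln (INR M)))
      by ring. rewrite exp_plus.
    pose proof (exp_pos (x * ln (INR M))).
    assert (1 + x / (INR M + 1) <= exp (x * (ln (INR M + 1) - ln (INR M)))).
    { eapply Rle_trans; [|apply exp_le_mono; apply Rmult_le_compat_l; [lra|exact Hl]].
      apply exp_ineq1_le. }
    assert (x + INR M + 1 = (INR M + 1) * (1 + x / (INR M + 1))) by (field; lra).
    rewrite H1.
    assert (0 < INR M + 1) by lra.
    assert (0 < 1 + x / (INR M + 1)).
    { assert (0 < x / (INR M + 1)) by (apply Rdiv_lt_0_compat; lra). lra. }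
    set (ea := exp (x * ln (INR M))) in *. set (eb := exp (x * (ln (INR M + 1) - ln (INR M)))) in *.
    replace ((INR M + 1) * (ea * eb)) with ((ea * (INR M + 1)) * eb) by ring.
    rewrite <- Rmult_assoc. apply Rmult_le_compat_l; [|lra]. nra. }
  rewrite HSM.
  apply (Rmult_le_reg_r (gauss_den x M * (x + (INR M + 1)))); [nra|].
  replace (INR (fact M) * Rpower (INR M) x / gauss_den x M * (gauss_den x M * (x + (INR M + 1))))
    with (INR (fact M) * (Rpower (INR M) x * (x + INR M + 1))) by (field; lra).
  replace ((INR M + 1) * INR (fact M) * Rpower (INR M + 1) x / (gauss_den x M * (x + (INR M + 1))) *
     (gauss_den x M * (x + (INR M + 1))))
    with (INR (fact M) * ((INR M + 1) * Rpower (INR M + 1) x)) by (field; lra).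
  apply Rmult_le_compat_l; lra.
Qed.

Lemma cv_shift (u : nat -> R) l : Un_cv (fun m => u (S m)) l -> Un_cv u l.
Proof.
  intros H eps He. destruct (H eps He) as [N HN]. exists (S N).
  intros m Hm. destruct m as [|m']; [lia|]. apply HN. lia.
Qed.

Lemma cv_ev (u v : nat -> R) l : (forall m, (1 <= m)%nat -> u m = v m) ->
  Un_cv v l -> Un_cv u l.
Proof.
  intros E H eps He. destruct (H eps He) as [N HN]. exists (S N).
  intros m Hm. rewrite E by lia. apply HN. lia.
Qed.

Lemma gauss_cv x : 0 < x -> exists L, 0 < L /\ Un_cv (gauss_seq x) L.
Proof.
  intros Hx.
  assert (Hg : Un_growing (fun m => gauss_seq x (S m))).
  { intros m. apply gauss_grow; auto; lia. }
  assert (Hb : has_ub (fun m => gauss_seq x (S m))).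
  { exists (/ (x * exp (- (2 * x * x)))). intros z [i ->]. apply gauss_ub; auto; lia. }
  destruct (growing_cv _ Hg Hb) as [l Hl].
  exists l. split.
  - pose proof (growing_ineq _ _ Hg Hl 0). pose proof (gauss_pos x 1 Hx (le_n _)). simpl in *. lra.
  - apply cv_shift. exact Hl.
Qed.

Lemma Gamma_spec x : 0 < x -> 0 < Gamma x /\ Un_cv (gauss_seq x) (Gamma x).
Proof.
  intros Hx. destruct (gauss_cv x Hx) as [L [HL HcL]].
  assert (Hs : Un_cv (gauss_seq x) (Gamma x)).
  { unfold Gamma. apply epsilon_spec. exists L; auto. }
  split; auto. rewrite (UL_sequence _ _ _ Hs HcL). auto.
Qed.

Lemma Gamma_pos x : 0 < x -> 0 < Gamma x.
Proof. intros; apply Gamma_spec; auto. Qed.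

Lemma lim_frac b : 0 < b -> Un_cv (fun m => INR m / (INR m + b)) 1.
Proof.
  intros Hb eps He. destruct (INR_unbounded (b / eps)) as [N HN]. exists N.
  intros m Hm. unfold R_dist. apply le_INR in Hm.
  assert (0 <= INR m) by apply pos_INR.
  assert (b / eps * eps = b) by (field; lra).
  assert (b < eps * INR m) by nra.
  replace (INR m / (INR m + b) - 1) with (- (b / (INR m + b))) by (field; lra).
  rewrite Rabs_Ropp, Rabs_right.
  2: { left. apply Rdiv_lt_0_compat; lra. }
  apply (Rmult_lt_reg_r (INR m + b)); [lra|]. unfold Rdiv.
  rewrite Rmult_assoc, Rinv_l by lra. nra.
Qed.

Lemma cv_const_mult c (u : nat -> R) l : Un_cv u l -> Un_cv (fun m => c * u m) (c * l).
Proof.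
  intros H. apply (CV_mult (fun _ => c) u). { intros e He; exists 0%nat; intros; unfold R_dist.
  rewrite Rminus_diag, Rabs_R0; auto. } auto.
Qed.

Lemma den_succ x m : gauss_den (x + 1) m * x = gauss_den x m * (x + INR m + 1).
Proof.
  induction m as [|k IH]; cbn [gauss_den].
  - simpl. ring.
  - rewrite S_INR. replace (gauss_den (x + 1) k * (x + 1 + (INR k + 1)) * x)
      with (gauss_den (x + 1) k * x * (x + 1 + (INR k + 1))) by ring.
    rewrite IH. ring.
Qed.

Lemma Gamma_succ x : 0 < x -> Gamma (x + 1) = x * Gamma x.
Proof.
  intros Hx. destruct (Gamma_spec x Hx) as [Hp Hc].
  destruct (Gamma_spec (x + 1)) as [_ Hc1]; [lra|].
  apply (UL_sequence (gauss_seq (x + 1))); auto.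
  apply cv_ev with (fun m => gauss_seq x m * (x * (INR m / (INR m + (x + 1))))).
  - intros m Hm. assert (HmR : 0 < INR m) by (apply lt_0_INR; lia).
    unfold gauss_seq. rewrite Rpower_plus, Rpower_1 by auto.
    pose proof (den_succ x m) as E.
    assert (HD : 0 < gauss_den x m).
    { rewrite den_eq. pose proof (lt_0_INR _ (lt_O_fact m)). pose proof (Pr_pos x m Hx).
      apply Rmult_lt_0_compat; nra. }
    assert (HD1 : gauss_den (x + 1) m = gauss_den x m * (x + INR m + 1) / x).
    { rewrite <- E. field. lra. }
    rewrite HD1. field. repeat split; lra.
  - replace (x * Gamma x) with (Gamma x * (x * 1)) by ring.
    apply CV_mult; auto. apply cv_const_mult. apply lim_frac. lra.
Qed.

Lemma Gamma_1 : Gamma 1 = 1.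
Proof.
  destruct (Gamma_spec 1) as [_ Hc]; [lra|].
  apply (UL_sequence (gauss_seq 1)); auto.
  apply cv_ev with (fun m => INR m / (INR m + 1)); [|apply lim_frac; lra].
  intros m Hm. assert (HmR : 0 < INR m) by (apply lt_0_INR; lia).
  assert (E : gauss_den 1 m = INR (fact (S m))).
  { clear. induction m as [|k IH]; cbn [gauss_den]. simpl; ring.
    rewrite IH. change (fact (S (S k))) with (S (S k) * fact (S k))%nat.
    rewrite mult_INR, (S_INR (S k)). ring. }
  unfold gauss_seq. rewrite E, Rpower_1 by auto.
  change (fact (S m)) with (S m * fact m)%nat. rewrite mult_INR, S_INR.
  pose proof (lt_0_INR _ (lt_O_fact m)). field. lra.
Qed.
Fixpoint w (g : R) (k : nat) : R :=
  match k with O => 1 | S j => w g j * (INR j + g) / (INR j + 1) end.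

Module MC.
Import all_boot all_algebra Rstruct ring.
Import GRing.Theory Num.Theory.
Local Open Scope ring_scope.

Definition conv (A B : nat -> R) (k : nat) : R := \sum_(i < k.+1) A i * B (k - i)%N.

Lemma wS g j : w g j.+1 * j.+1%:R = w g j * (j%:R + g).
Proof.
  rewrite /= !RdivE !RmultE !RplusE !INRE R1E.
  have H : j.+1%:R != 0 :> R by rewrite pnatr_eq0.
  rewrite -natr1 in H.
  by rewrite -natr1 -mulrA mulVf // mulr1.
Qed.

Lemma w0 g : w g 0 = 1. Proof. by []. Qed.

Lemma conv0 A B : conv A B 0 = A 0%N * B 0%N.
Proof. by rewrite /conv big_ord1. Qed.

Lemma conv_ext A A' B B' k : (forall i, A i = A' i) -> (forall i, B i = B' i) ->
  conv A B k = conv A' B' k.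
Proof. by move=> HA HB; rewrite /conv; apply: eq_bigr => i _; rewrite HA HB. Qed.

Definition tr (N : nat) (A : nat -> R) : {poly R} := \poly_(i < N) A i.

Lemma conv_poly N A B k : (k < N)%N -> conv A B k = (tr N A * tr N B)`_k.
Proof.
  move=> HkN; rewrite coefM /conv; apply: eq_bigr => i _.
  rewrite /tr !coef_poly.
  have Hi : (i < N)%N by apply: leq_ltn_trans HkN; rewrite -ltnS.
  have Hki : (k - i < N)%N by apply: leq_ltn_trans HkN; apply: leq_subr.
  by rewrite Hi Hki.
Qed.

Lemma coefM_agree N (r p q : {poly R}) k : (forall i, (i < N)%N -> p`_i = q`_i) ->
  (k < N)%N -> (r * p)`_k = (r * q)`_k.
Proof.
  move=> H HkN; rewrite !coefM; apply: eq_bigr => i _; rewrite H //.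
  by apply: leq_ltn_trans HkN; apply: leq_subr.
Qed.

Lemma conv_comm A B k : conv A B k = conv B A k.
Proof. by rewrite (conv_poly k.+1) // (conv_poly k.+1 B) // mulrC. Qed.

Lemma tr_conv N A B i : (i < N)%N -> (tr N (conv A B))`_i = (tr N A * tr N B)`_i.
Proof. by move=> HiN; rewrite /tr coef_poly HiN (conv_poly N). Qed.

Lemma conv_assoc A B C k : conv A (conv B C) k = conv (conv A B) C k.
Proof.
  have H1 := @coefM_agree k.+1 (tr k.+1 A) _ (tr k.+1 B * tr k.+1 C) k
    (fun i Hi => tr_conv k.+1 B C i Hi) (ltnSn k).
  have H2 := @coefM_agree k.+1 (tr k.+1 C) _ (tr k.+1 A * tr k.+1 B) k
    (fun i Hi => tr_conv k.+1 A B i Hi) (ltnSn k).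
  rewrite (conv_poly k.+1) // H1 conv_comm (conv_poly k.+1) // H2.
  by rewrite mulrA mulrC.
Qed.

Lemma conv_w a b k : conv (w a) (w b) k = w (a + b) k.
Proof.
  elim: k => [|k IH]; first by rewrite conv0 /= R1E mulr1.
  have Hk : k.+1%:R != 0 :> R by rewrite pnatr_eq0.
  apply: (mulIf Hk).
  rewrite wS -IH /conv.
  rewrite mulr_suml.
  transitivity (\sum_(i < k.+2) (w a i * i%:R) * w b (k.+1 - i)%N
              + \sum_(i < k.+2) w a i * (w b (k.+1 - i)%N * (k.+1 - i)%N%:R)).
    rewrite -big_split /=; apply: eq_bigr => i _.
    have Hi : (i <= k.+1)%N by rewrite -ltnS.
    have -> : k.+1%:R = i%:R + (k.+1 - i)%:R :> R by rewrite -natrD subnKC.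
    ring.
  rewrite big_ord_recl /= mulr0 mul0r add0r.
  rewrite [X in _ + X]big_ord_recr /= subnn mulr0 mulr0 addr0.
  rewrite mulr_suml -big_split /=; apply: eq_bigr => i _.
  rewrite /bump /= add1n subSS wS.
  have Hi : (i <= k)%N by rewrite -ltnS.
  rewrite subSn // wS natrB // add0n ?RplusE. ring.
Qed.

Lemma bump0 i : bump 0 i = i.+1. Proof. by rewrite /bump leq0n. Qed.

Lemma conv_wid g Y k : (forall j, w g j.+1 = 0) -> conv (w g) Y k = Y k.
Proof.
  move=> H; rewrite /conv big_ord_recl w0 mul1r subn0 big1 ?addr0 //.
  by move=> i _; rewrite lift0 H mul0r.
Qed.

Lemma conv_wm1 g X k : w g 1 = - 1 -> (forall j, w g j.+2 = 0) ->
  conv (w g) X k.+1 = X k.+1 - X k.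
Proof.
  move=> H1 H2; rewrite /conv big_ord_recl big_ord_recl.
  rewrite big1 ?addr0; last by move=> i _; rewrite !lift0 H2 mul0r.
  rewrite lift0 H1 subSS subn0 subn0 w0 mul1r mulN1r //.
Qed.

Lemma conv0ww g h Y : conv (w g) (conv (w h) Y) 0 = Y 0%N.
Proof. by rewrite !conv0 !w0 !mul1r. Qed.

Definition ssum (m : nat) (F : nat -> R) : R := \sum_(i < m) F (nat_of_ord i).

Lemma fold_ssum s m F :
  List.fold_right Rplus 0 (List.map F (List.seq s m)) = ssum m (fun i => F (s + i)%N).
Proof.
  elim: m s => [|m IH] s; first by rewrite /ssum big_ord0.
  rewrite /= IH /ssum big_ord_recl /= addn0 RplusE; congr (_ + _).
  by apply: eq_bigr => i _; rewrite bump0 addnS addSn.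
Qed.

Lemma ssum_ext m F G : (forall i, Peano.lt i m -> F i = G i) -> ssum m F = ssum m G.
Proof. move=> H; rewrite /ssum; apply: eq_bigr => i _; apply: H; apply/ltP; exact: ltn_ord. Qed.

Lemma ssum_scale c m F : Rmult c (ssum m F) = ssum m (fun i => Rmult c (F i)).
Proof. by rewrite /ssum RmultE mulr_sumr. Qed.

Lemma conv_ssum A B k : conv A B k = ssum k.+1 (fun i => A i * B (k - i)%N).
Proof. by []. Qed.

Lemma conv_first A B k :
  conv A B k = Rplus (Rmult (A 0%N) (B k)) (ssum k (fun i => Rmult (A i.+1) (B (k - i.+1)%N))).
Proof. by rewrite /conv big_ord_recl subn0. Qed.

End MC.

Lemma w_S g j : w g (S j) = w g j * (INR j + g) / (INR j + 1).
Proof. reflexivity. Qed.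

Lemma w_gamma g j : 0 < g -> w g j = Gamma (INR j + g) / Gamma (INR j + 1) / Gamma g.
Proof.
  intros Hg. pose proof (Gamma_pos g Hg).
  induction j as [|j IH].
  - replace (INR 0 + g) with g by (simpl; ring). replace (INR 0 + 1) with 1 by (simpl; ring).
    rewrite Gamma_1. simpl. field. lra.
  - rewrite w_S, IH, S_INR.
    pose proof (pos_INR j).
    replace (INR j + 1 + g) with ((INR j + g) + 1) by ring.
    rewrite (Gamma_succ (INR j + g)) by lra.
    rewrite (Gamma_succ (INR j + 1)) by lra.
    pose proof (Gamma_pos (INR j + g)). pose proof (Gamma_pos (INR j + 1)).
    field. repeat split; lra.
Qed.

Lemma w_rising g j : 0 < g -> rising (INR j + 1) (g - 1) / Gamma g = w g j.
Proof.
  intros Hg. rewrite w_gamma by auto. unfold rising. pose proof (pos_INR j).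
  destruct (Req_EM_T (INR j + 1) 0) as [E|E]; [lra|].
  replace (INR j + 1 + (g - 1)) with (INR j + g) by ring. reflexivity.
Qed.

Lemma w_zero j : w 0 (S j) = 0.
Proof.
  induction j as [|j IH].
  - rewrite w_S. simpl. field.
  - rewrite w_S, IH. unfold Rdiv. ring.
Qed.

Lemma w_m1_1 : w (-1) 1 = -1.
Proof. rewrite w_S. simpl. field. Qed.

Lemma w_m1_SS j : w (-1) (S (S j)) = 0.
Proof.
  induction j as [|j IH].
  - rewrite w_S, w_m1_1. simpl. field.
  - rewrite w_S, IH. unfold Rdiv. ring.
Qed.

Lemma up_IZR z : up (IZR z) = (z + 1)%Z.
Proof.
  symmetry. apply tech_up; rewrite plus_IZR; simpl; lra.
Qed.

Lemma nterms_nat d k : nterms (d + INR k) d = k.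
Proof.
  unfold nterms. replace (d + INR k - d) with (IZR (Z.of_nat k))
    by (rewrite <- INR_IZR_INZ; ring).
  rewrite up_IZR. replace (Z.of_nat k + 1 - 1)%Z with (Z.of_nat k) by ring.
  apply Nat2Z.id.
Qed.

Lemma nterms_neg d j : nterms (d + 1 - INR (S j)) d = 0%nat.
Proof.
  unfold nterms. replace (d + 1 - INR (S j) - d) with (IZR (- Z.of_nat j))
    by (rewrite opp_IZR, <- INR_IZR_INZ, S_INR; ring).
  rewrite up_IZR. lia.
Qed.

Lemma frac_sum_neg g d h j : frac_sum g d h (d + 1 - INR (S j)) = 0.
Proof.
  unfold frac_sum. rewrite nterms_neg. simpl. ring.
Qed.

Lemma frac_sum_nat g d h k : 0 < g ->
  frac_sum g d h (d + INR k) = MC.ssum k (fun i => h (d + 1 + INR i) * w g (k - S i)).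
Proof.
  intros Hg. unfold frac_sum. rewrite nterms_nat, MC.fold_ssum, MC.ssum_scale.
  apply MC.ssum_ext. intros i Hi.
  rewrite <- (w_rising g (k - S i)) by auto.
  rewrite minus_INR by lia.
  change (ssrnat.addn 1 i) with (S i).
  replace (d + INR k - (d + INR (S i) - 1)) with (INR k - INR (S i) + 1)
    by ring.
  replace (d + INR (S i)) with (d + 1 + INR i) by (rewrite S_INR; ring).
  unfold Rdiv. ring.
Qed.

Lemma nabla_S m h t : nabla_iter (S m) h t = nabla_iter m h t - nabla_iter m h (t - 1).
Proof. reflexivity. Qed.

Lemma conv_w' a b c0 i : a + b = c0 -> MC.conv (w a) (w b) i = w c0 i.
Proof. intros H. rewrite MC.conv_w. rewrite <- H. reflexivity. Qed.

Lemma frac_sum_conv b d h k : 0 < b ->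
  frac_sum b d h (d + 1 + INR k) = MC.conv (w b) (fun i => h (d + 1 + INR i)) k.
Proof.
  intros Hb. replace (d + 1 + INR k) with (d + INR (S k)) by (rewrite S_INR; ring).
  rewrite frac_sum_nat by auto. rewrite MC.conv_comm, MC.conv_ssum. reflexivity.
Qed.

Lemma nabla_conv b d h : 0 < b -> forall m,
  (forall k, nabla_iter m (frac_sum b d h) (d + 1 + INR k)
     = MC.conv (w (- INR m)) (MC.conv (w b) (fun i => h (d + 1 + INR i))) k) /\
  (forall j, nabla_iter m (frac_sum b d h) (d + 1 - INR (S j)) = 0).
Proof.
  intros Hb m. set (Fs := MC.conv (w b) (fun i => h (d + 1 + INR i))).
  induction m as [|m [I1 I2]].
  - split.
    + intros k. change (nabla_iter 0 (frac_sum b d h) (d + 1 + INR k))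
        with (frac_sum b d h (d + 1 + INR k)).
      rewrite frac_sum_conv by auto.
      replace (- INR 0) with 0 by (simpl; ring).
      rewrite (MC.conv_wid 0 Fs k w_zero). reflexivity.
    + intros j. apply frac_sum_neg.
  - split.
    + intros k. rewrite nabla_S. destruct k as [|k].
      * replace (d + 1 + INR 0 - 1) with (d + 1 - INR 1) by (simpl; ring).
        rewrite I2, I1, !MC.conv0. simpl w. lra.
      * replace (d + 1 + INR (S k) - 1) with (d + 1 + INR k) by (rewrite S_INR; ring).
        rewrite !I1.
        transitivity (MC.conv (w (-1)) (MC.conv (w (- INR m)) Fs) (S k)).
        { rewrite (MC.conv_wm1 (-1) (MC.conv (w (- INR m)) Fs) k w_m1_1 w_m1_SS). reflexivity. }
        rewrite MC.conv_assoc. apply MC.conv_ext; [|reflexivity].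
        intros i. apply conv_w'. rewrite S_INR. ring.
    + intros j. rewrite nabla_S, I2.
      replace (d + 1 - INR (S j) - 1) with (d + 1 - INR (S (S j)))
        by (rewrite (S_INR (S j)); ring).
      rewrite I2. ring.
Qed.

Theorem theorem5p1
  (alpha : R) (n : nat) (a c : R) (f : R -> R -> R) (y : R -> R)
  (Halpha : 0 < alpha)
  (Hnonint : forall z : Z, alpha <> IZR z)
  (Hn : INR n - 1 <= alpha < INR n)
  (Heq : forall k : nat, (1 <= k)%nat ->
     frac_diff n alpha (a + INR n - 1 - 1) y (a + INR n - 1 + INR k)
     = f (a + INR n - 1 + INR k) (y (a + INR n - 1 + INR k)))
  (Hinit1 : frac_sum (INR n - alpha) (a + INR n - 1 - 1) y (a + INR n - 1) = c)
  (Hinit2 : y (a + INR n - 1) = c) :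
  forall k : nat,
    let t := a + INR n - 1 + INR k in
    y t = rising (t - (a + INR n - 1) + 1) (alpha - 1) / Gamma alpha * c
          + frac_sum alpha (a + INR n - 1) (fun s => f s (y s)) t.
Proof.
  intros k t. subst t.
  set (A := a + INR n - 1) in *.
  set (d := A - 1) in *.
  assert (Hb : 0 < INR n - alpha) by lra.
  set (Ys := fun i => y (d + 1 + INR i)).
  set (G := fun k => match k with O => c | S _ => f (d + 1 + INR k) (y (d + 1 + INR k)) end).
  assert (Hd : d + 1 = A) by (unfold d; ring).
  assert (Key : forall k, MC.conv (w (- INR n)) (MC.conv (w (INR n - alpha)) Ys) k = G k).
  { intros [|k'].
    - rewrite MC.conv0ww. unfold Ys, G. rewrite Hd.
      replace (A + INR 0) with A by (simpl; ring). exact Hinit2.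
    - pose proof (proj1 (nabla_conv (INR n - alpha) d y Hb n) (S k')) as H1.
      pose proof (Heq (S k') ltac:(lia)) as H2.
      unfold frac_diff in H2.
      replace (A + INR (S k')) with (d + 1 + INR (S k')) in H2 by (rewrite <- Hd; ring).
      rewrite H1 in H2. exact H2. }
  assert (HY : forall k, Ys k = MC.conv (w alpha) G k).
  { intros k0.
    rewrite <- (MC.conv_wid 0 Ys k0 w_zero).
    transitivity (MC.conv (MC.conv (w alpha) (w (- alpha))) Ys k0).
    { apply MC.conv_ext; [|reflexivity]. intros i. symmetry. apply conv_w'. ring. }
    rewrite <- MC.conv_assoc. apply MC.conv_ext; [reflexivity|].
    intros i. rewrite <- Key.
    transitivity (MC.conv (MC.conv (w (- INR n)) (w (INR n - alpha))) Ys i).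
    { apply MC.conv_ext; [|reflexivity]. intros i0. symmetry. apply conv_w'. ring. }
    rewrite MC.conv_assoc. reflexivity. }
  replace (A + INR k) with (d + 1 + INR k) at 1 by (rewrite <- Hd; ring).
  change (y (d + 1 + INR k)) with (Ys k).
  rewrite HY, MC.conv_comm, MC.conv_first.
  replace (A + INR k - A + 1) with (INR k + 1) by ring.
  rewrite (w_rising alpha k Halpha).
  rewrite (frac_sum_nat alpha A _ k Halpha).
  change (G 0%nat) with c. f_equal; [ring|].
  apply MC.ssum_ext. intros i Hi.
  change (G (S i)) with (f (d + 1 + INR (S i)) (y (d + 1 + INR (S i)))).
  replace (d + 1 + INR (S i)) with (A + 1 + INR i) by (rewrite S_INR, <- Hd; ring).
  reflexivity.
Qed.
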